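(* For any graph $G = (V,E)$ we have \[ \operatorname{pn}_\ell(G) \geq \max\left\{ \frac{|E(H)|}{2|V(H)|-3} \;\middle|\; H \subseteq G,\ H \neq \emptyset\right\}. \]
   Context: All graphs are finite and simple; $H \subseteq G$ ranges over nonempty subgraphs of $G$. A linear embedding of $G=(V,E)$ is a pair $(\prec,\mathcal{P})$ where $\prec$ is a total ordering of $V$ and $\mathcal{P}$ is a partition of $E$ into parts called pages. Two edges $uv, xy$ with $u\prec v$, $x \prec y$ cross if $u \prec x \prec v \prec y$ or $x \prec u \prec y \prec v$. A book embedding is a linear embedding in which no two crossing edges lie on the same page. For a book embedding and a vertex $v$, let $\mathcal{P}_v$ be the set of pages containing at least one edge incident to $v$; the embedding is $k$-local if $|\mathcal{P}_v| \le k$ for all $v$. The local page number $\operatorname{pn}_\ell(G)$ is the smallest $k$ such that $G$ admits a $k$-local book embedding (with any number of pages). *)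

(* Defs.v *)
From mathcomp Require Import all_boot all_order all_algebra.
From mathcomp Require Import zify.
From Stdlib Require Import ClassicalEpsilon.
Set Implicit Arguments. Unset Strict Implicit. Unset Printing Implicit Defensive.

(* A (finite simple) graph is given by a vertex type T : finType and an
   adjacency relation e : rel T (assumed symmetric and irreflexive where
   needed). *)
Definition edges (T : finType) (e : rel T) : {set {set T}} :=
  [set [set p.1; p.2] | p in [set p : T * T | e p.1 p.2]].

(* A linear embedding: an injective map ord : T -> nat (giving the total
   order u < v iff ord u < ord v) together with a page assignment
   pg : T -> T -> nat on edges (pg u v = pg v u, i.e. a function of the
   unordered edge {u,v}); the pages are the nonempty fibres of pg, so pg
   encodes an arbitrary partition of the edge set (any number of pages). *)
Definition crosses (T : Type) (ord : T -> nat) (u v x y : T) : bool :=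
  ((ord u < ord x) && (ord x < ord v) && (ord v < ord y)) ||
  ((ord x < ord u) && (ord u < ord y) && (ord y < ord v)).

Definition is_book_embedding (T : finType) (e : rel T)
    (ord : T -> nat) (pg : T -> T -> nat) : Prop :=
  [/\ injective ord,
      (forall u v, e u v -> pg u v = pg v u) &
      (forall u v x y, e u v -> e x y -> ord u < ord v -> ord x < ord y ->
          crosses ord u v x y -> pg u v != pg x y)].

Definition pages_at (T : finType) (e : rel T) (pg : T -> T -> nat) (v : T)
  : seq nat := undup [seq pg v w | w <- enum T & e v w].

Definition is_k_local (T : finType) (e : rel T) (k : nat) : Prop :=
  exists (ord : T -> nat) (pg : T -> T -> nat),
    is_book_embedding e ord pg /\ forall v, size (pages_at e pg v) <= k.

Lemma k_local_exists (T : finType) (e : rel T) : exists k, is_k_local e k.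
Proof.
exists #|T|.
pose N := #|T|.
pose r : T -> nat := fun x => enum_rank x.
have rlt : forall x, r x < N by move=> x; rewrite /r /N ltn_ord.
exists r, (fun u v => minn (r u) (r v) * N + maxn (r u) (r v)).
split; last first.
  move=> v; rewrite /pages_at.
  apply: leq_trans (size_undup _) _.
  rewrite size_map size_filter.
  by apply: leq_trans (count_size _ _) _; rewrite -cardE.
split.
- by move=> x y H; apply: enum_rank_inj; apply: ord_inj.
- by move=> u v _; rewrite minnC maxnC.
- move=> u v x y _ _ huv hxy hc; apply/eqP.
  rewrite (minn_idPl (ltnW huv)) (maxn_idPr (ltnW huv)).
  rewrite (minn_idPl (ltnW hxy)) (maxn_idPr (ltnW hxy)) => E.
  have N0 : 0 < N by apply: leq_ltn_trans (rlt u).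
  have : (r u * N + r v) %/ N = (r x * N + r y) %/ N by rewrite E.
  rewrite !divnMDl // !divn_small ?rlt // !addn0 => Eux.
  by move: hc Eux; rewrite /crosses /r; lia.
Qed.

Definition k_local_pred (T : finType) (e : rel T) : pred nat :=
  fun k => if excluded_middle_informative (is_k_local e k) then true else false.

Lemma k_local_pred_exists (T : finType) (e : rel T) : exists k, k_local_pred e k.
Proof.
have [k Hk] := k_local_exists e; exists k; rewrite /k_local_pred.
by case: excluded_middle_informative.
Qed.

Definition local_pn (T : finType) (e : rel T) : nat :=
  ex_minn (k_local_pred_exists e).

(* Main.v *)
Require Import Defs.
From mathcomp Require Import all_boot all_order all_algebra.
From mathcomp Require Import zify.
From Stdlib Require Import ClassicalEpsilon.
Import GRing.Theory Num.Theory.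

Lemma core (T : finType) (e : rel T) (e_sym : symmetric e)
  (ord : T -> nat) (pg : T -> T -> nat) (k : nat)
  (Hemb : is_book_embedding e ord pg) (Hk : forall v, size (pages_at e pg v) <= k)
  (W : {set T}) (D : {set T * T}) (x0 : T)
  (HD : forall d, d \in D -> [/\ e d.1 d.2, ord d.1 < ord d.2, d.1 \in W & d.2 \in W])
  (W2 : 2 <= #|W|) :
  #|D| <= k * (2 * #|W| - 3).
Proof.
case: Hemb => ord_inj pg_sym pg_cross.
pose N := (\max_(d in D) pg d.1 d.2).+1.
have pgN : forall d, d \in D -> pg d.1 d.2 < N.
  by move=> d dD; rewrite ltnS; apply: (@leq_bigmax_cond _ (mem D) (fun d => pg d.1 d.2)) dD.
pose page (d : T * T) : 'I_N := inord (pg d.1 d.2).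
have pageV : forall d, d \in D -> val (page d) = pg d.1 d.2.
  by move=> d dD; rewrite /page; apply: inordK; exact: pgN.
have pageE : forall d d', d \in D -> d' \in D -> page d = page d' ->
    pg d.1 d.2 = pg d'.1 d'.2.
  by move=> d d' dD d'D E; rewrite -pageV // -pageV // E.
pose inc (x : T) (p : 'I_N) :=
  [exists d in D, (page d == p) && ((d.1 == x) || (d.2 == x))].
have inc1 : forall d, d \in D -> inc d.1 (page d).
  by move=> d dD; apply/existsP; exists d; rewrite dD !eqxx.
have inc2 : forall d, d \in D -> inc d.2 (page d).
  by move=> d dD; apply/existsP; exists d; rewrite dD !eqxx orbT.
pose I := [set xp : T * 'I_N | inc xp.1 xp.2].
pose Pset := [set page d | d in D].
pose m := #|Pset|.
pose maxv (p : 'I_N) := odflt x0 [pick x | inc x p && [forall y, inc y p ==> (ord y <= ord x)]].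
pose minv (p : 'I_N) := odflt x0 [pick x | inc x p && [forall y, inc y p ==> (ord x <= ord y)]].
have maxP : forall p, p \in Pset -> inc (maxv p) p /\ forall y, inc y p -> ord y <= ord (maxv p).
  move=> p /imsetP [d dD ->].
  have i0 := inc1 d dD.
  rewrite /maxv; case: pickP => [x /andP[ix /forallP H] | none] /=.
    by split => // y iy; exact: (implyP (H y) iy).
  exfalso; case: (@arg_maxnP _ d.1 (fun x => inc x (page d)) ord i0) => x ix Hx.
  move: (none x); rewrite ix /= => /negP; apply; apply/forallP => y.
  by apply/implyP => iy; exact: Hx.
have minP : forall p, p \in Pset -> inc (minv p) p /\ forall y, inc y p -> ord (minv p) <= ord y.
  move=> p /imsetP [d dD ->].
  have i0 := inc1 d dD.
  rewrite /minv; case: pickP => [x /andP[ix /forallP H] | none] /=.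
    by split => // y iy; exact: (implyP (H y) iy).
  exfalso; case: (@arg_minnP _ d.1 (fun x => inc x (page d)) ord i0) => x ix Hx.
  move: (none x); rewrite ix /= => /negP; apply; apply/forallP => y.
  by apply/implyP => iy; exact: Hx.
have pageP : forall d, d \in D -> page d \in Pset by move=> d dD; apply: imset_f.
pose L := [set d : T * T | [forall d' in D, ((page d' == page d) && (d'.1 == d.1)) ==> (ord d'.2 <= ord d.2)]].
pose Dr := D :&: L.
pose Dl := D :\: L.
pose Mx := [set (maxv p, p) | p in Pset].
pose Mn := [set (minv p, p) | p in Pset].
have cMx : #|Mx| = m by rewrite card_imset // => p q [].
have cMn : #|Mn| = m by rewrite card_imset // => p q [].
have MxI : Mx \subset I.
  by apply/subsetP => _ /imsetP [p pP ->]; rewrite inE /=; case: (maxP p pP).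
have MnI : Mn \subset I.
  by apply/subsetP => _ /imsetP [p pP ->]; rewrite inE /=; case: (minP p pP).
have Mdisj : Mx :&: Mn = set0.
  apply/setP => xp; rewrite !inE; apply/negP => /andP [/imsetP [p pP ->] /imsetP [q qP [E1 E2]]].
  subst q.
  move: (pP) => /imsetP [d dD Ep].
  have [_ Hmax] := maxP p pP; have [_ Hmin] := minP p pP.
  have h1 := Hmin d.1; have h2 := Hmax d.2.
  have i1 := inc1 d dD; have i2 := inc2 d dD; rewrite -Ep in i1 i2.
  have [_ lt _ _] := HD d dD.
  move: (h1 i1) (h2 i2); rewrite E1; lia.
have notL : forall d d', d \in D -> d' \in D -> d \notin L -> d'.2 = d.2 ->
    page d' = page d -> ~ (ord d'.1 < ord d.1).
  move=> d d' dD d'D dL E2 Ep lt.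
  move: dL; rewrite inE negb_forall_in => /existsP [d'' /andP [d''D]].
  rewrite negb_imply => /andP [/andP [/eqP Ep'' /eqP E1''] lt''].
  have [e' o' _ _] := HD d' d'D.
  have [ed od _ _] := HD d dD.
  have [e'' o'' _ _] := HD d'' d''D.
  have := pg_cross d'.1 d'.2 d''.1 d''.2 e' e'' o' o''.
  rewrite /crosses E2 E1''.
  move: lt lt'' od; rewrite -E1'' => lt lt'' od.
  rewrite lt od /= ltnNge lt'' /= => /(_ isT).
  rewrite -E2 (pageE d' d'') //; first by rewrite eqxx.
  by rewrite Ep Ep''.
have Dr_bound : #|Dr| <= #|I| - m.
  have -> : #|Dr| = #|[set (d.1, page d) | d in Dr]|.
    apply/esym/card_in_imset => -[a b] [a' b'] /setIP [dD dL] /setIP [d'D d'L] /= [E1 E2].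
    subst a'.
    move: dL d'L; rewrite !inE => /forall_inP H /forall_inP H'.
    have h1 := implyP (H _ d'D); have h2 := implyP (H' _ dD).
    rewrite /= E2 !eqxx /= in h1 h2.
    have h1' := h1 isT; have h2' := h2 isT.
    by rewrite (ord_inj b b') //; apply/eqP; rewrite eqn_leq h1' h2'.
  rewrite -cMx.
  have -> : #|I| - #|Mx| = #|I :\: Mx| by rewrite cardsD (setIidPr MxI).
  apply: subset_leq_card; apply/subsetP => _ /imsetP [d /setIP [dD dL] ->].
  rewrite !inE /= inc1 // andbT; apply/imsetP => -[p pP [E1 E2]].
  subst p; have [_ Hmax] := maxP _ pP.
  have := Hmax d.2 (inc2 d dD); rewrite -E1.
  by have [_ lt _ _] := HD d dD; lia.
have Dl_bound : #|Dl| <= #|I| - 2 * m.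
  have -> : #|Dl| = #|[set (d.2, page d) | d in Dl]|.
    apply/esym/card_in_imset => -[a b] [a' b'] /setDP [dD dL] /setDP [d'D d'L] /= [E1 E2].
    subst b'.
    have n1 := notL _ _ dD d'D dL erefl (esym E2).
    have n2 := notL _ _ d'D dD d'L erefl E2.
    simpl in n1, n2.
    by rewrite (ord_inj a a') //; lia.
  have -> : 2 * m = #|Mx :|: Mn| by rewrite cardsU Mdisj cards0 cMx cMn; lia.
  have -> : #|I| - #|Mx :|: Mn| = #|I :\: (Mx :|: Mn)|.
    by rewrite cardsD (setIidPr _) // subUset MxI MnI.
  apply: subset_leq_card; apply/subsetP => _ /imsetP [d /setDP [dD dL] ->].
  rewrite !inE /= inc2 // andbT negb_or; apply/andP; split.
    apply/imsetP => -[p pP [E1 E2]].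
    subst p; have [_ Hmax] := maxP _ pP.
    move: dL; rewrite inE negb_forall_in => /existsP [d'' /andP [d''D]].
    rewrite negb_imply => /andP [/andP [/eqP Ep'' /eqP E1''] lt''].
    have i := inc2 d'' d''D; rewrite Ep'' in i.
    by have := Hmax _ i; rewrite -E1; move: lt''; lia.
  apply/imsetP => -[p pP [E1 E2]].
  subst p; have [_ Hmin] := minP _ pP.
  have := Hmin d.1 (inc1 d dD); rewrite -E1.
  by have [_ lt _ _] := HD d dD; lia.
have DrDl : #|D| = #|Dr| + #|Dl| by rewrite cardsID.
have I_m : #|I| <= #|W| * m.
  rewrite -cardsX; apply: subset_leq_card; apply/subsetP => -[x p].
  rewrite !inE /= => /existsP [d /and3P [dD /eqP <- /orP [] /eqP <-]];
  by have [_ _ w1 w2] := HD d dD; rewrite pageP // ?w1 ?w2.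
have I_k : #|I| <= #|W| * k.
  rewrite -sum_nat_const -sum1_card.
  rewrite (partition_big fst (fun x => x \in W)); last first.
    move=> [x p]; rewrite inE /= => /existsP [d /and3P [dD _ /orP [] /eqP <-]];
    by have [_ _ w1 w2] := HD d dD.
  apply: leq_sum => x xW.
  rewrite sum1_card cardE.
  set s := enum _.
  apply: leq_trans (Hk x).
  rewrite -(size_map (fun xp : T * 'I_N => val xp.2)).
  apply: uniq_leq_size.
    rewrite map_inj_in_uniq ?enum_uniq //.
    move=> [a p] [b q]; rewrite !mem_enum !unfold_in /= => /andP [_ /eqP ->] /andP [_ /eqP ->] E.
    by congr pair; apply: val_inj.
  move=> _ /mapP [[a p] + ->]; rewrite mem_enum unfold_in /= => /andP [].
  rewrite inE /= => /existsP [d /and3P [dD /eqP <- Hx]] /eqP Ea; subst a.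
  rewrite pageV // /pages_at mem_undup.
  have [ed _ _ _] := HD d dD.
  case/orP: Hx => /eqP <-.
    by apply: map_f; rewrite mem_filter mem_enum ed.
  rewrite pg_sym //; apply: map_f; rewrite mem_filter mem_enum andbT e_sym //.
move: Dr_bound Dl_bound DrDl I_m I_k W2.
have mI : 2 * m <= #|I|.
  have -> : 2 * m = #|Mx :|: Mn| by rewrite cardsU Mdisj cards0 cMx cMn; lia.
  by apply: subset_leq_card; rewrite subUset MxI MnI.
case: (leqP m k) => hmk.
  have := leq_mul hmk (leqnn (2 * #|W| - 3)).
  nia.
nia.
Qed.

Theorem lemma1 (T : finType) (e : rel T)
    (e_sym : symmetric e) (e_irr : irreflexive e)
    (W : {set T}) (F : {set {set T}})
    (HW : W != set0)
    (HF : F \subset edges e)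
    (HFW : forall f, f \in F -> f \subset W) :
  ((#|F|%:R / ((2 * #|W|)%:R - 3)) <= (local_pn e)%:R :> rat)%R.
Proof.
rewrite /local_pn; case: ex_minnP => k Hkp _.
move: Hkp; rewrite /k_local_pred; case: excluded_middle_informative => // Hloc _.
case: Hloc => ord [pg [Hemb Hk]].
have [ord_inj _ _] := Hemb.
case/set0Pn: HW => x0 _.
have Fedge : forall f, f \in F -> exists2 p : T * T, e p.1 p.2 & f = [set p.1; p.2].
  move=> f fF; have := subsetP HF f fF; rewrite /edges => /imsetP [p].
  by rewrite inE => ep ->; exists p.
have [W1 | W2] := leqP #|W| 1.
  have -> : F = set0.
    apply/setP => f; rewrite inE; apply/negP => fF.
    have [p ep Ef] := Fedge f fF.
    have := subset_leq_card (HFW f fF); rewrite Ef cards2.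
    have : p.1 != p.2 by apply/eqP => E; move: ep; rewrite E e_irr.
    by move=> ->; move: W1; lia.
  by rewrite cards0 mul0r ler0n.
pose D := [set d : T * T | [&& e d.1 d.2, ord d.1 < ord d.2 & [set d.1; d.2] \in F]].
have HD : forall d, d \in D -> [/\ e d.1 d.2, ord d.1 < ord d.2, d.1 \in W & d.2 \in W].
  move=> d; rewrite inE => /and3P [ed od dF].
  have sW := HFW _ dF.
  by split => //; apply: (subsetP sW); rewrite !inE eqxx ?orbT.
have FD : #|F| <= #|D|.
  apply: leq_trans (leq_imset_card (fun d : T * T => [set d.1; d.2]) D).
  apply: subset_leq_card; apply/subsetP => f fF.
  have [p ep Ef] := Fedge f fF.
  have ne : ord p.1 != ord p.2.
    by apply/eqP => /ord_inj E; move: ep; rewrite E e_irr.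
  case: (ltngtP (ord p.1) (ord p.2)) ne => // lt _.
    by apply/imsetP; exists p => //; rewrite inE ep lt -Ef fF.
  apply/imsetP; exists (p.2, p.1) => /=; last by rewrite Ef setUC.
  by rewrite inE /= e_sym ep lt setUC -Ef fF.
have := @core T e e_sym ord pg k Hemb Hk W D x0 HD W2.
move=> Hc.
have W3 : (3 <= 2 * #|W|)%N by move: W2; lia.
have pos : (0 < (2 * #|W|)%:R - 3 :> rat)%R.
  by rewrite -(natrB _ W3) ltr0n; move: W2; lia.
rewrite ler_pdivrMr // -(natrB _ W3) -natrM ler_nat.
exact: leq_trans FD Hc.
Qed.
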